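(* Let $\Lambda=(\alpha_1,\alpha_2,\beta_2,\beta_3,\beta_4)$ be five distinct real numbers with $\alpha_2+\beta_2\neq\beta_3+\beta_4$. Extend to sequences by $\alpha_i:=\alpha_1$ for odd $i$, $\alpha_i:=\alpha_2$ for even $i$, and $\beta_i:=\beta_j$ whenever $j\in\{2,3,4\}$ and $i\equiv j\pmod 3$. Let $n\ge1$, let $a_1,\dots,a_n\in\mathbb R$ and $b_2,\dots,b_n>0$, and let $C_1,\dots,C_n$ be defined by $C_1=(a_1)$ and $C_{k+1}=\begin{pmatrix}a_{k+1}& b_{k+1}{\bf e}_1^\top\\ {\bf e}_1 & C_k\end{pmatrix}$. The following are equivalent: (i) $\sigma(C_1)=\{\alpha_1\}$ and $\sigma(C_i)\cap\{\alpha_1,\alpha_2,\beta_2,\beta_3,\beta_4\}=\{\alpha_i,\beta_i\}$ for $i=2,\dots,n$; (ii) for $1\le i\le n$, $a_i=\alpha_1$ if $i$ is odd, $a_2=-\alpha_1+\alpha_2+\beta_2$, and $a_i=\alpha_2$ if $i>2$ is even; and for $2\le i\le n$, $b_2=(\beta_2-\alpha_1)(\alpha_1-\alpha_2)$, $b_3=(\beta_3-\alpha_2)(\beta_3-\beta_2)$, $b_4=\dfrac{(\beta_4-\alpha_1)(\beta_3-\beta_4)(\alpha_2+\beta_2-\beta_3-\beta_4)}{\beta_4-\beta_2}$, and $b_i=(\beta_j-\alpha_1)(\beta_j-\alpha_2)$ when $i>4$, $j\in\{2,3,4\}$, $i\equiv j\pmod 3$. Moreover, when these conditions hold: if $n\ge4$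 then $\Lambda\in\mathcal B$; if $n=3$ then $(\alpha_1,\alpha_2,\beta_2,\beta_3)\in\mathcal B_3$; if $n=2$ then $(\alpha_1,\alpha_2,\beta_2)\in\mathcal B_2$.
   Context: ${\bf e}_1$ denotes the first standard basis vector of the appropriate length. $\mathcal B$ is the set of all $(\alpha_1,\alpha_2,\beta_2,\beta_3,\beta_4)\in\mathbb R^5$ with five distinct entries satisfying one of the following twelve conditions: $\beta_2<\alpha_1<\alpha_2<\beta_3<\beta_4$; $\beta_2<\beta_4<\alpha_1<\alpha_2<\beta_3$; $\beta_4<\beta_2<\alpha_1<\alpha_2<\beta_3$ and $\alpha_2+\beta_2>\beta_4+\beta_3$; $\beta_3<\beta_2<\alpha_1<\alpha_2<\beta_4$ and $\alpha_2+\beta_2<\beta_4+\beta_3$; $\beta_3<\beta_2<\beta_4<\alpha_1<\alpha_2$; $\beta_4<\beta_3<\beta_2<\alpha_1<\alpha_2$; $\beta_4<\beta_3<\alpha_2<\alpha_1<\beta_2$; $\beta_3<\alpha_2<\alpha_1<\beta_4<\beta_2$; $\beta_3<\alpha_2<\alpha_1<\beta_2<\beta_4$ and $\alpha_2+\beta_2<\beta_4+\beta_3$; $\beta_4<\alpha_2<\alpha_1<\beta_2<\beta_3$ and $\alpha_2+\beta_2>\beta_4+\beta_3$; $\alpha_2<\alpha_1<\beta_4<\beta_2<\beta_3$; $\alpha_2<\alpha_1<\beta_2<\beta_3<\beta_4$. $\mathcal B_3$ is the set of $(\alpha_1,\alpha_2,\beta_2,\beta_3)$ such that $(\alpha_1,\alpha_2,\beta_2,\beta_3,\beta_4)\in\mathcal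 B$ for some $\beta_4$; $\mathcal B_2$ is the set of $(\alpha_1,\alpha_2,\beta_2)$ such that $(\alpha_1,\alpha_2,\beta_2,\beta_3,\beta_4)\in\mathcal B$ for some $\beta_3,\beta_4$. *)

(* Defs.v *)
From HB Require Import structures.
From mathcomp Require Import all_boot all_order all_algebra.
From mathcomp Require Import reals.
Set Implicit Arguments. Unset Strict Implicit. Unset Printing Implicit Defensive.
Import Order.TTheory GRing.Theory Num.Theory.
Local Open Scope ring_scope.

Section Defs.
Variable R : realType.

Definition e1c (k : nat) : 'cV[R]_k.+1 := \col_(i < k.+1) (i == ord0)%:R.
Definition e1r (k : nat) : 'rV[R]_k.+1 := \row_(j < k.+1) (j == ord0)%:R.

(* Cmat a b k is the (k+1)x(k+1) matrix C_{k+1} of the paper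
   (a, b : nat -> R are 1-based sequences a_1, a_2, ... and b_2, b_3, ...):
   C_1 = (a_1),  C_{k+1} = [[a_{k+1}, b_{k+1} e_1^T], [e_1, C_k]]. *)
Fixpoint Cmat (a b : nat -> R) (k : nat) : 'M[R]_k.+1 :=
  match k return 'M[R]_k.+1 with
  | 0 => (a 1%N)%:M
  | k'.+1 => block_mx ((a k.+1)%:M : 'M[R]_1) (b k.+1 *: e1r k')
                      (e1c k') (Cmat a b k')
  end.

Definition alphaSeq (al1 al2 : R) (i : nat) : R := if odd i then al1 else al2.
Definition betaSeq (be2 be3 be4 : R) (i : nat) : R :=
  match (i %% 3)%N with 2 => be2 | 0 => be3 | _ => be4 end.

Definition distinct5 (x1 x2 x3 x4 x5 : R) : Prop :=
  uniq [:: x1; x2; x3; x4; x5].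

Definition inB (a1 a2 b2 b3 b4 : R) : Prop :=
  distinct5 a1 a2 b2 b3 b4 /\
  ( ((b2 < a1) /\ (a1 < a2) /\ (a2 < b3) /\ (b3 < b4))
 \/ ((b2 < b4) /\ (b4 < a1) /\ (a1 < a2) /\ (a2 < b3))
 \/ ((b4 < b2) /\ (b2 < a1) /\ (a1 < a2) /\ (a2 < b3) /\ (a2 + b2 > b4 + b3))
 \/ ((b3 < b2) /\ (b2 < a1) /\ (a1 < a2) /\ (a2 < b4) /\ (a2 + b2 < b4 + b3))
 \/ ((b3 < b2) /\ (b2 < b4) /\ (b4 < a1) /\ (a1 < a2))
 \/ ((b4 < b3) /\ (b3 < b2) /\ (b2 < a1) /\ (a1 < a2))
 \/ ((b4 < b3) /\ (b3 < a2) /\ (a2 < a1) /\ (a1 < b2))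
 \/ ((b3 < a2) /\ (a2 < a1) /\ (a1 < b4) /\ (b4 < b2))
 \/ ((b3 < a2) /\ (a2 < a1) /\ (a1 < b2) /\ (b2 < b4) /\ (a2 + b2 < b4 + b3))
 \/ ((b4 < a2) /\ (a2 < a1) /\ (a1 < b2) /\ (b2 < b3) /\ (a2 + b2 > b4 + b3))
 \/ ((a2 < a1) /\ (a1 < b4) /\ (b4 < b2) /\ (b2 < b3))
 \/ ((a2 < a1) /\ (a1 < b2) /\ (b2 < b3) /\ (b3 < b4)) ).

Definition inB3 (a1 a2 b2 b3 : R) : Prop := exists b4, inB a1 a2 b2 b3 b4.
Definition inB2 (a1 a2 b2 : R) : Prop := exists b3 b4, inB a1 a2 b2 b3 b4.

End Defs.

(* Main.v *)
Require Import Defs.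
From HB Require Import structures.
From mathcomp Require Import all_boot all_order all_algebra.
From mathcomp Require Import reals.
From mathcomp Require Import ring lra zify.
Import Order.TTheory GRing.Theory Num.Theory.
Local Open Scope ring_scope.

Section Aux.
Variable R : realType.

Lemma bE00 m n (A : 'M[R]_1) (B : 'M_(1,n)) (C : 'M_(m,1)) (D : 'M_(m,n)) :
  (block_mx A B C D : 'M_(1 + m, 1 + n)) ord0 ord0 = A 0 0.
Proof.
have -> : (ord0 : 'I_(1 + m)) = lshift m ord0 by apply: val_inj.
have -> : (ord0 : 'I_(1 + n)) = lshift n ord0 by apply: val_inj.
by rewrite block_mxEul.
Qed.

Lemma bE0l m n (A : 'M[R]_1) (B : 'M_(1,n)) (C : 'M_(m,1)) (D : 'M_(m,n)) j :
  (block_mx A B C D : 'M_(1 + m, 1 + n)) ord0 (lift ord0 j) = B 0 j.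
Proof.
have -> : (ord0 : 'I_(1 + m)) = lshift m ord0 by apply: val_inj.
have -> : (lift ord0 j : 'I_(1 + n)) = rshift 1 j by apply: val_inj.
by rewrite block_mxEur.
Qed.

Lemma bEl0 m n (A : 'M[R]_1) (B : 'M_(1,n)) (C : 'M_(m,1)) (D : 'M_(m,n)) i :
  (block_mx A B C D : 'M_(1 + m, 1 + n)) (lift ord0 i) ord0 = C i 0.
Proof.
have -> : (ord0 : 'I_(1 + n)) = lshift n ord0 by apply: val_inj.
have -> : (lift ord0 i : 'I_(1 + m)) = rshift 1 i by apply: val_inj.
by rewrite block_mxEdl.
Qed.

Lemma bEll m n (A : 'M[R]_1) (B : 'M_(1,n)) (C : 'M_(m,1)) (D : 'M_(m,n)) i j :
  (block_mx A B C D : 'M_(1 + m, 1 + n)) (lift ord0 i) (lift ord0 j) = D i j.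
Proof.
have -> : (lift ord0 j : 'I_(1 + n)) = rshift 1 j by apply: val_inj.
have -> : (lift ord0 i : 'I_(1 + m)) = rshift 1 i by apply: val_inj.
by rewrite block_mxEdr.
Qed.

Lemma lift1_lift0 n (j : 'I_n) :
  lift (lift (ord0 : 'I_n.+2) (ord0 : 'I_n.+1)) (lift ord0 j) = lift ord0 (lift ord0 j).
Proof. by apply: val_inj; rewrite /= /bump /=; lia. Qed.

Lemma lift1_0 n : lift (lift (ord0 : 'I_n.+2) (ord0 : 'I_n.+1)) ord0 = ord0.
Proof. by apply: val_inj. Qed.

Lemma det_border n (M : 'M[R]_n.+2) (al be ga : R) :
  (forall j, M ord0 (lift ord0 j) = be * (j == ord0)%:R) ->
  (forall i, M (lift ord0 i) ord0 = ga * (i == ord0)%:R) ->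
  \det M = M ord0 ord0 * \det (row' ord0 (col' ord0 M))
     - be * ga * \det (row' ord0 (col' ord0 (row' ord0 (col' ord0 M)))).
Proof.
move=> Hr Hc.
rewrite (expand_det_row M ord0) big_ord_recl big_ord_recl big1; last first.
  by move=> i _; rewrite Hr mulr0 mul0r.
rewrite addr0 /cofactor Hr eqxx mulr1 /= expr0 mul1r expr1.
set N := row' ord0 (col' (lift ord0 ord0) M).
rewrite (expand_det_col N ord0) big_ord_recl big1; last first.
  by move=> i _; rewrite /N !mxE lift1_0 Hc mulr0 mul0r.
rewrite addr0 /cofactor /N !mxE lift1_0 Hc eqxx mulr1 /= expr0 mul1r.
have -> : row' ord0 (col' ord0 (row' ord0 (col' (lift ord0 ord0) M))) =
          row' ord0 (col' ord0 (row' ord0 (col' ord0 M))).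
  by apply/matrixP=> i j; rewrite !mxE lift1_lift0.
ring.
Qed.

Variables (a b : nat -> R).

Fixpoint P (k : nat) (x : R) : R :=
  match k with
  | 0 => 1
  | k'.+1 => match k' with
             | 0 => x - a 1
             | k''.+1 => (x - a k) * P k' x - b k * P k'' x
             end
  end.

Lemma PSS k x : P k.+2 x = (x - a k.+2) * P k.+1 x - b k.+2 * P k x.
Proof. by []. Qed.

Lemma CmatS k : Cmat a b k.+1 = block_mx ((a k.+2)%:M : 'M_1) (b k.+2 *: e1r R k)
                      (e1c R k) (Cmat a b k).
Proof. by []. Qed.

Lemma rc0 m n (A : 'M[R]_1) (B : 'M_(1,n)) (C : 'M_(m,1)) (D : 'M_(m,n)) :
  row' ord0 (col' ord0 (block_mx A B C D : 'M_(1 + m, 1 + n))) = D.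
Proof. by apply/matrixP=> i j; rewrite -(bEll _ _ A B C D) !mxE. Qed.

Lemma subblock k x : (x%:M - Cmat a b k.+1 : 'M_(1 + k.+1)) =
  block_mx ((x - a k.+2)%:M : 'M_1) (- (b k.+2 *: e1r R k)) (- e1c R k) (x%:M - Cmat a b k).
Proof.
rewrite CmatS (scalar_mx_block 1 k.+1). rewrite (opp_block_mx ((a k.+2)%:M : 'M_1)). rewrite (add_block_mx (x%:M : 'M_1)).
by rewrite !sub0r raddfB.
Qed.

Lemma detC k x : \det (x%:M - Cmat a b k) = P k.+1 x /\
   \det (row' ord0 (col' ord0 (x%:M - Cmat a b k))) = P k x.
Proof.
elim: k => [|k [IH1 IH2]].
  split; first by rewrite det_mx11 !mxE /= mulr1n.
  by rewrite det_mx00.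
have E : row' ord0 (col' ord0 (x%:M - Cmat a b k.+1)) = x%:M - Cmat a b k.
  by rewrite subblock rc0.
split; last by rewrite E IH1.
rewrite (det_border k (x%:M - Cmat a b k.+1) 0 (- b k.+2) (-1)).
- rewrite E IH1 IH2 subblock bE00 !mxE eqxx mulr1n PSS; ring.
- move=> j; rewrite subblock bE0l !mxE.
  by rewrite mulNr.
- move=> i; rewrite subblock bEl0 !mxE.
  by rewrite mulN1r.
Qed.

Lemma eigC k x : eigenvalue (Cmat a b k) x <-> P k.+1 x = 0.
Proof.
have -> : eigenvalue (Cmat a b k) x = (\det (x%:M - Cmat a b k) == 0).
  apply/eigenvalueP/det0P=> [[v Av_av v_nz] | [v v_nz Av_av]]; exists v => //.
    by rewrite mulmxBr Av_av mul_mx_scalar subrr.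
  by apply/eqP; rewrite -mul_mx_scalar eq_sym -subr_eq0 -mulmxBr Av_av.
by rewrite (proj1 (detC k x)); split => /eqP.
Qed.


Variables (al1 al2 be2 be3 be4 : R).
Hypotheses (h12 : al1 != al2) (h13 : al1 != be2) (h14 : al1 != be3) (h15 : al1 != be4)
  (h23 : al2 != be2) (h24 : al2 != be3) (h25 : al2 != be4)
  (h34 : be2 != be3) (h35 : be2 != be4) (h45 : be3 != be4)
  (hs : al2 + be2 != be3 + be4).

Local Notation al := (alphaSeq al1 al2).
Local Notation be := (betaSeq be2 be3 be4).

Definition Fp (i : nat) : Prop :=
  match i with
  | 0 => True
  | 1 => a 1 = al1
  | 2 => a 2 = - al1 + al2 + be2 /\ b 2 = (be2 - al1) * (al1 - al2)
  | 3 => a 3 = al1 /\ b 3 = (be3 - al2) * (be3 - be2)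
  | 4 => a 4 = al2 /\
         b 4 = (be4 - al1) * (be3 - be4) * (al2 + be2 - be3 - be4) / (be4 - be2)
  | _ => a i = al i /\ b i = (be i - al1) * (be i - al2)
  end.

Definition Sp (i : nat) : Prop :=
  [/\ P i (al i) = 0, P i (be i) = 0, P i (al i.+1) != 0, P i (be i.+1) != 0
    & P i (be i.+2) != 0].

Lemma alSS i : al i.+2 = al i.
Proof. by rewrite /alphaSeq /= negbK. Qed.

Lemma beS3 i : be i.+3 = be i.
Proof. by rewrite /betaSeq -addn3 modnDr. Qed.

Lemma al_cases i : al i = al1 \/ al i = al2.
Proof. by rewrite /alphaSeq; case: ifP; [left|right]. Qed.

Lemma be_cases i : be i = be2 \/ be i = be3 \/ be i = be4.
Proof.
rewrite /betaSeq; case: (i %% 3)%N => [|[|[|k]]]; by [left|right;left|right;right].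
Qed.

Lemma al_be i j : al i != be j.
Proof.
by case: (al_cases i) => ->; case: (be_cases j) => [|[]] ->.
Qed.

Lemma al_alS i : al i != al i.+1.
Proof. by rewrite /alphaSeq /=; case: ifP => _ //; rewrite eq_sym. Qed.

Lemma modcases i : [\/ (i %% 3 = 0)%N /\ (i.+1 %% 3 = 1)%N /\ (i.+2 %% 3 = 2)%N,
   (i %% 3 = 1)%N /\ (i.+1 %% 3 = 2)%N /\ (i.+2 %% 3 = 0)%N |
   (i %% 3 = 2)%N /\ (i.+1 %% 3 = 0)%N /\ (i.+2 %% 3 = 1)%N].
Proof.
have : (i %% 3 < 3)%N by rewrite ltn_pmod.
have e1 : (i.+1 %% 3 = (i %% 3 + 1) %% 3)%N by rewrite -addn1 modnDml.
have e2 : (i.+2 %% 3 = (i %% 3 + 2) %% 3)%N by rewrite -addn2 modnDml.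
rewrite e1 e2.
case: (i %% 3)%N => [|[|[|k]]] // _.
- by constructor 1.
- by constructor 2.
- by constructor 3.
Qed.

Lemma be_beS i : be i != be i.+1 /\ be i != be i.+2 /\ be i.+1 != be i.+2.
Proof.
rewrite /betaSeq; case: (modcases i) => [[->[->->]]|[->[->->]]|[->[->->]]];
  rewrite ?(eq_sym be3) ?(eq_sym be4) //.
Qed.

Lemma albeprod i x : (x - al i) * (x - al i.+1) = (x - al1) * (x - al2).
Proof. by rewrite /alphaSeq /=; case: ifP => _ //; rewrite mulrC. Qed.

Lemma inLam i x : x \in [:: al1; al2; be2; be3; be4] ->
  x = al i \/ x = be i \/ x = al i.+1 \/ x = be i.+1 \/ x = be i.+2.
Proof.
move=> Hx.
have H : x = al1 \/ x = al2 \/ x = be2 \/ x = be3 \/ x = be4.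
  by move: Hx; rewrite !inE => /orP[/eqP|/orP[/eqP|/orP[/eqP|/orP[/eqP|/eqP]]]]; tauto.
rewrite /alphaSeq /betaSeq !oddS.
case: (odd i); case: (modcases i) => [[->[->->]]|[->[->->]]|[->[->->]]];
  case: H => [->|[->|[->|[->|->]]]]; solve [ repeat (first [left; reflexivity | right]); reflexivity ].
Qed.


Ltac nz := repeat (first [apply: mulf_neq0 | rewrite oppr_eq0]); rewrite ?subr_eq0;
  first [assumption | rewrite eq_sym; assumption].

Lemma P2E : Fp 1 -> Fp 2 -> forall x, P 2 x = (x - al2) * (x - be2).
Proof. move=> h1 [h2 hb] x; have {}h1 : a 1 = al1 := h1; rewrite PSS [P 1 x]/= [P 0 x]/= h1 h2 hb; ring. Qed.

Lemma P3E : Fp 1 -> Fp 2 -> Fp 3 ->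
  forall x, P 3 x = (x - al1) * ((x - al2) * (x - be2) - (be3 - al2) * (be3 - be2)).
Proof.
move=> h1 h2 [h3 hb] x; rewrite PSS P2E // [P 1 x]/= (h1 : a 1 = al1) h3 hb; ring.
Qed.

Lemma S2 : Fp 1 -> Fp 2 -> Sp 2.
Proof.
move=> h1 h2; rewrite /Sp !P2E //.
have -> : al 2 = al2 by []. have -> : be 2 = be2 by [].
have -> : al 3 = al1 by []. have -> : be 3 = be3 by []. have -> : be 4 = be4 by [].
split; rewrite ?subrr ?mul0r ?mulr0 //; nz.
Qed.

Lemma S3 : Fp 1 -> Fp 2 -> Fp 3 -> Sp 3.
Proof.
move=> h1 h2 h3; rewrite /Sp !P3E //.
have -> : al 3 = al1 by []. have -> : be 3 = be3 by [].
have -> : al 4 = al2 by []. have -> : be 4 = be4 by []. have -> : be 5 = be2 by [].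
split.
- by rewrite subrr mul0r.
- by rewrite subrr mulr0.
- rewrite subrr mul0r sub0r mulrN oppr_eq0; nz.
- rewrite (_ : (be4 - al2) * (be4 - be2) - (be3 - al2) * (be3 - be2) =
     (be4 - be3) * ((be3 + be4) - (al2 + be2))); last by ring.
  nz.
- rewrite subrr mulr0 sub0r mulrN oppr_eq0; nz.
Qed.

Lemma S4 : Fp 1 -> Fp 2 -> Fp 3 -> Fp 4 -> b 4 != 0 -> Sp 4.
Proof.
move=> h1 h2 h3 h4 hb4; have [ha4 hb] := h4.
have hne : be4 - be2 != 0 by nz.
rewrite /Sp !(PSS 2) !P3E // !P2E // ha4.
have -> : al 4 = al2 by []. have -> : be 4 = be4 by [].
have -> : al 5 = al1 by []. have -> : be 5 = be2 by []. have -> : be 6 = be3 by [].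
split.
- by rewrite !subrr !mul0r mulr0 subr0.
- rewrite hb; field; exact: hne.
- rewrite (_ : _ - _ = - (b 4 * ((al1 - al2) * (al1 - be2)))); last by ring.
  rewrite oppr_eq0; apply: mulf_neq0 => //; nz.
- rewrite (_ : _ - _ = (be2 - al2) * (be2 - al1) * (- ((be3 - al2) * (be3 - be2)))); last by ring.
  nz.
- rewrite (_ : _ - _ = - (b 4 * ((be3 - al2) * (be3 - be2)))); last by ring.
  rewrite oppr_eq0; apply: mulf_neq0 => //; nz.
Qed.

Lemma Sstep m : (2 <= m)%N -> Sp m -> Sp m.+1 -> Sp m.+2 -> a m.+3 = al m.+3 ->
  a m.+2 = al m.+2 -> b m.+3 = (be m.+3 - al1) * (be m.+3 - al2) -> b m.+3 != 0 ->
  Sp m.+3.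
Proof.
move=> _ [s0a s0b _ _ _] [s1a s1b s1c s1d s1e] [s2a s2b s2c s2d s2e] ha3 ha2 hb3 hb3n.
rewrite ?alSS ?beS3 in s1a s1b s1c s1d s1e s2a s2b s2c s2d s2e ha3 ha2 hb3 *.
rewrite /Sp ?alSS ?beS3.
split; rewrite (PSS m.+1) ha3.
- by rewrite subrr mul0r s1a mulr0 subr0.
- rewrite (PSS m) ha2 s0b mulr0 subr0 hb3 -(albeprod m (be m)); ring.
- rewrite s2a mulr0 sub0r oppr_eq0; exact: mulf_neq0.
- rewrite s1b mulr0 subr0; apply: mulf_neq0 => //; rewrite subr_eq0 eq_sym; exact: al_be.
- rewrite s2b mulr0 sub0r oppr_eq0; exact: mulf_neq0.
Qed.


Lemma F2 : Fp 1 -> P 2 al2 = 0 -> P 2 be2 = 0 -> Fp 2.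
Proof.
move=> h1; rewrite !PSS [P 1 _]/= [P 1 be2]/= [P 0 _]/= [P 0 be2]/= (h1 : a 1 = al1) => e1 e2.
have e : (al2 - be2) * (al2 + be2 - al1 - a 2) = 0.
  have -> : (al2 - be2) * (al2 + be2 - al1 - a 2) =
    ((al2 - a 2) * (al2 - al1) - b 2 * 1) - ((be2 - a 2) * (be2 - al1) - b 2 * 1) by ring.
  by rewrite e1 e2 subrr.
move/eqP: e; rewrite mulf_eq0 subr_eq0 (negbTE h23) /= => /eqP e.
have ha2 : a 2 = - al1 + al2 + be2 by lra.
split => //.
have -> : b 2 = (al2 - a 2) * (al2 - al1) - ((al2 - a 2) * (al2 - al1) - b 2 * 1) by ring.
rewrite e1 subr0 ha2; ring.
Qed.

Lemma F3 : Fp 1 -> Fp 2 -> P 3 al1 = 0 -> P 3 be3 = 0 -> Fp 3.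
Proof.
move=> h1 h2 e1 e2.
rewrite PSS P2E // [P 1 _]/= (h1 : a 1 = al1) in e1.
rewrite PSS P2E // [P 1 _]/= (h1 : a 1 = al1) in e2.
have e : (al1 - a 3) * ((al1 - al2) * (al1 - be2)) = 0 by rewrite -e1 subrr mulr0 subr0.
move/eqP: e; rewrite mulf_eq0 => /orP[/eqP e|]; last first.
  by rewrite mulf_eq0 !subr_eq0 (negbTE h12) (negbTE h13).
have ha3 : a 3 = al1 by lra.
split => //.
have e' : (be3 - al1) * ((be3 - al2) * (be3 - be2) - b 3) = 0 by rewrite -e2 ha3; ring.
move/eqP: e'; rewrite mulf_eq0 subr_eq0 eq_sym (negbTE h14) /= => /eqP e'.
by symmetry; apply: subr0_eq.
Qed.

Lemma F4 : Fp 1 -> Fp 2 -> Fp 3 -> P 4 al2 = 0 -> P 4 be4 = 0 -> Fp 4.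
Proof.
move=> h1 h2 h3 e1 e2.
have hne : be4 - be2 != 0 by nz.
have e : (al2 - a 4) * ((al2 - al1) * ((be3 - al2) * (be3 - be2))) = - P 4 al2.
  by rewrite (PSS 2) P3E // P2E //; ring.
move: e; rewrite e1 oppr0 => /eqP; rewrite mulf_eq0 => /orP[/eqP e|]; last first.
  by move=> H; exfalso; move: H; apply/negP; nz.
have ha4 : a 4 = al2 by lra.
split => //.
have e' : (be4 - al2) * ((be4 - al1) * (be3 - be4) * (al2 + be2 - be3 - be4)
            - b 4 * (be4 - be2)) = P 4 be4.
  by rewrite (PSS 2) P3E // P2E // ha4; ring.
move: e'; rewrite e2 => /eqP; rewrite mulf_eq0 subr_eq0 eq_sym (negbTE h25) /= => /eqP e'.
apply: (mulIf hne); rewrite divfK //; symmetry; exact: subr0_eq.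
Qed.

Lemma Fa i : (3 <= i)%N -> Fp i -> a i = al i.
Proof. by case: i => [|[|[|[|[|i]]]]] //= _ []. Qed.

Lemma Fstep m : (2 <= m)%N -> Sp m -> Sp m.+1 -> Sp m.+2 -> a m.+2 = al m.+2 ->
  P m.+3 (al m.+3) = 0 -> P m.+3 (be m.+3) = 0 ->
  a m.+3 = al m.+3 /\ b m.+3 = (be m.+3 - al1) * (be m.+3 - al2).
Proof.
move=> _ [s0a s0b _ _ _] [s1a s1b s1c s1d s1e] [s2a s2b s2c s2d s2e] ha2 e1 e2.
rewrite ?alSS ?beS3 in s1a s1b s1c s1d s1e s2a s2b s2c s2d s2e ha2 e1 e2 *.
rewrite (PSS m.+1) s1a mulr0 subr0 in e1.
move/eqP: e1; rewrite mulf_eq0 (negbTE s2c) orbF subr_eq0 => /eqP ha3.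
split; first by [].
rewrite (PSS m.+1) (PSS m) ha2 s0b mulr0 subr0 -ha3 in e2.
have e : ((be m - al1) * (be m - al2) - b m.+3) * P m.+1 (be m) = 0.
  by rewrite -(albeprod m) -e2; ring.
move/eqP: e; rewrite mulf_eq0 (negbTE s1e) orbF => /eqP e.
by symmetry; apply: subr0_eq.
Qed.

Lemma allS i : (2 <= i)%N -> (forall j, (1 <= j <= i)%N -> Fp j) ->
  (forall j, (2 <= j <= i)%N -> b j != 0) -> Sp i.
Proof.
elim/ltn_ind: i => i IH hi hF hb.
case: i IH hi hF hb => [|[|[|[|[|m]]]]] IH hi hF hb //.
- by apply: S2; apply: hF.
- by apply: S3; apply: hF.
- by apply: S4; [apply: hF ..|apply: hb].
have hF5 : Fp m.+4.+1 by apply: hF; clear -m; lia.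
have [ha5 hb5] := hF5.
apply: (Sstep m.+2).
- by [].
- apply: IH => [||j hj|j hj]; [clear -m; lia|clear -m; lia|apply: hF; clear -hj; lia|apply: hb; clear -hj; lia].
- apply: IH => [||j hj|j hj]; [clear -m; lia|clear -m; lia|apply: hF; clear -hj; lia|apply: hb; clear -hj; lia].
- apply: IH => [||j hj|j hj]; [clear -m; lia|clear -m; lia|apply: hF; clear -hj; lia|apply: hb; clear -hj; lia].
- exact: ha5.
- by apply: Fa; [by []|apply: hF; clear -m; lia].
- exact: hb5.
- by apply: hb; clear -m; lia.
Qed.

Lemma Fall i : (1 <= i)%N -> (forall j, (1 <= j <= i)%N -> Fp j) ->
  (forall j, (2 <= j <= i)%N -> b j != 0) ->
  P i.+1 (al i.+1) = 0 -> P i.+1 (be i.+1) = 0 -> Fp i.+1.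
Proof.
case: i => [|[|[|[|m]]]] // _ hF hb e1 e2.
- by apply: F2 => //; apply: hF.
- by apply: F3 => //; apply: hF.
- by apply: F4 => //; apply: hF.
- apply: (Fstep m.+2); [by []| | | | |exact: e1|exact: e2].
  + apply: allS => [|j hj|j hj]; [clear -m; lia|apply: hF; clear -hj; lia|apply: hb; clear -hj; lia].
  + apply: allS => [|j hj|j hj]; [clear -m; lia|apply: hF; clear -hj; lia|apply: hb; clear -hj; lia].
  + apply: allS => [|j hj|j hj]; [clear -m; lia|apply: hF; clear -hj; lia|apply: hb; clear -hj; lia].
  + by apply: Fa; [by []|apply: hF; clear -m; lia].
Qed.

Lemma Siff i : Sp i -> forall x, x \in [:: al1; al2; be2; be3; be4] ->
  (P i x = 0 <-> x = al i \/ x = be i).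
Proof.
move=> [sa sb sc sd se] x hx; split; last by case=> ->.
move=> e; case: (inLam i x hx) => [E|[E|[E|[E|E]]]]; rewrite E in e.
- by left.
- by right.
- by rewrite e eqxx in sc.
- by rewrite e eqxx in sd.
- by rewrite e eqxx in se.
Qed.

End Aux.

Section B.
Variable R : realType.

Lemma sign2 (x y : R) : 0 < x * y -> (0 < x /\ 0 < y) \/ (x < 0 /\ y < 0).
Proof.
case: (ltgtP x 0) => hx.
- by rewrite nmulr_rgt0 // => hy; right.
- by rewrite pmulr_rgt0 // => hy; left.
- by rewrite hx mul0r ltxx.
Qed.

Lemma sign2n (x y : R) : x * y < 0 -> (0 < x /\ y < 0) \/ (x < 0 /\ 0 < y).
Proof.
move=> h; have : 0 < (- x) * y by rewrite mulNr oppr_gt0.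
case/sign2 => [[h1 h2]|[h1 h2]].
- by right; split => //; rewrite -oppr_gt0.
- by left; split => //; rewrite -oppr_lt0.
Qed.

Lemma d5 (x1 x2 x3 x4 x5 : R) : distinct5 x1 x2 x3 x4 x5 ->
  [/\ x1 != x2, x1 != x3, x1 != x4, x1 != x5 &
  [/\ x2 != x3, x2 != x4, x2 != x5, x3 != x4 & [/\ x3 != x5 & x4 != x5]]].
Proof.
rewrite /distinct5 /= !inE !negb_or.
by case/andP => /and4P[-> -> -> ->] /andP[/and3P[-> -> ->] /andP[/andP[-> ->] /andP[-> _]]].
Qed.

Ltac pick := first [ left; repeat split; lra | right; pick | repeat split; lra ].

Ltac splt x y := let H := fresh "o" in
  have H : x < y \/ y < x by (apply/orP; apply: lt_total; first [assumption | rewrite eq_sym; assumption]);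
  case: H => H.

Lemma inB_of (a1 a2 b2 b3 b4 : R) : distinct5 a1 a2 b2 b3 b4 ->
  0 < (b2 - a1) * (a1 - a2) -> 0 < (b3 - a2) * (b3 - b2) ->
  0 < (b4 - a1) * (b3 - b4) * (a2 + b2 - b3 - b4) / (b4 - b2) ->
  inB a1 a2 b2 b3 b4.
Proof.
move=> Hd h2 h3 h4; split => //.
have [h12 h13 h14 h15 [h23 h24 h25 h34 [h35 h45]]] := d5 _ _ _ _ _ Hd.
case/sign2: h2 => [[u1 u2]|[u1 u2]]; case/sign2: h3 => [[v1 v2]|[v1 v2]];
case/sign2: h4 => [[w1 w2]|[w1 w2]]; rewrite ?invr_gt0 ?invr_lt0 in w2.
all: first [ case/sign2: w1 => [[x1 x2]|[x1 x2]] | case/sign2n: w1 => [[x1 x2]|[x1 x2]] ].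
all: first [ case/sign2: x1 => [[y1 y2]|[y1 y2]] | case/sign2n: x1 => [[y1 y2]|[y1 y2]] ].
all: splt b4 a2.
all: try (exfalso; lra).
all: pick.
Qed.

Ltac dist := rewrite /distinct5 /= !inE !negb_or /=;
  repeat (apply/andP; split); try done; apply/eqP => E; lra.

Lemma inB3_of (a1 a2 b2 b3 : R) :
  0 < (b2 - a1) * (a1 - a2) -> 0 < (b3 - a2) * (b3 - b2) -> inB3 a1 a2 b2 b3.
Proof.
case/sign2 => [[u1 u2]|[u1 u2]]; case/sign2 => [[v1 v2]|[v1 v2]].
- exists (b3 + 1); split; [dist | pick].
- exists ((a1 + b2) / 2); split; [dist | pick].
- exists (b3 + 1); split; [dist | pick].
- exists ((b2 + a1) / 2); split; [dist | pick].
Qed.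

Lemma inB2_of (a1 a2 b2 : R) : 0 < (b2 - a1) * (a1 - a2) -> inB2 a1 a2 b2.
Proof.
case/sign2 => [[u1 u2]|[u1 u2]].
- exists (b2 + 1), (b2 + 2); split; [dist | pick].
- exists (a2 + 1), (a2 + 2); split; [dist | pick].
Qed.
End B.

Lemma al_in (R : realType) (al1 al2 be2 be3 be4 : R) k :
  alphaSeq al1 al2 k \in [:: al1; al2; be2; be3; be4].
Proof. by rewrite /alphaSeq; case: ifP; rewrite !inE eqxx ?orbT. Qed.

Lemma be_in (R : realType) (al1 al2 be2 be3 be4 : R) k :
  betaSeq be2 be3 be4 k \in [:: al1; al2; be2; be3; be4].
Proof. by rewrite /betaSeq; case: (k %% 3)%N => [|[|[|?]]]; rewrite !inE eqxx ?orbT. Qed.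

Theorem mainTheorem5 (R : realType) (al1 al2 be2 be3 be4 : R)
  (n : nat) (a b : nat -> R) :
  distinct5 al1 al2 be2 be3 be4 ->
  al2 + be2 != be3 + be4 ->
  (1 <= n)%N ->
  (forall i : nat, (2 <= i <= n)%N -> 0 < b i) ->
  let alpha := alphaSeq al1 al2 in
  let beta := betaSeq be2 be3 be4 in
  let Lam := [:: al1; al2; be2; be3; be4] in
  let condI :=
    (forall x : R, eigenvalue (Cmat a b 0) x <-> x = al1) /\
    (forall i : nat, (2 <= i <= n)%N -> forall x : R, x \in Lam ->
       (eigenvalue (Cmat a b i.-1) x <-> x = alpha i \/ x = beta i)) in
  let condII :=
    (forall i : nat, (1 <= i <= n)%N -> odd i -> a i = al1) /\
    ((2 <= n)%N -> a 2%N = - al1 + al2 + be2) /\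
    (forall i : nat, (2 < i <= n)%N -> ~~ odd i -> a i = al2) /\
    ((2 <= n)%N -> b 2%N = (be2 - al1) * (al1 - al2)) /\
    ((3 <= n)%N -> b 3%N = (be3 - al2) * (be3 - be2)) /\
    ((4 <= n)%N -> b 4%N =
        (be4 - al1) * (be3 - be4) * (al2 + be2 - be3 - be4) / (be4 - be2)) /\
    (forall i : nat, (4 < i <= n)%N ->
        b i = (beta i - al1) * (beta i - al2)) in
  (condI <-> condII) /\
  (condII ->
     ((4 <= n)%N -> inB al1 al2 be2 be3 be4) /\
     (n = 3%N -> inB3 al1 al2 be2 be3) /\
     (n = 2%N -> inB2 al1 al2 be2)).
Proof.
move=> Hd Hs Hn Hb alpha beta Lam condI condII.
have [h12 h13 h14 h15 [h23 h24 h25 h34 [h35 h45]]] := d5 _ _ _ _ _ _ Hd.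
set F := Fp R a b al1 al2 be2 be3 be4.
have allS' := allS R a b al1 al2 be2 be3 be4 h12 h13 h14 h15 h23 h24 h25 h34 h35 h45 Hs.
have Fall' := Fall R a b al1 al2 be2 be3 be4 h12 h13 h14 h15 h23 h24 h25 h34 h35 h45 Hs.
have hbn : forall j, (2 <= j <= n)%N -> b j != 0.
  by move=> j hj; apply: lt0r_neq0; apply: Hb.
have IIF : condII <-> (forall j, (1 <= j <= n)%N -> F j).
  split.
  - move=> [c1 [c2 [c3 [c4 [c5 [c6 c7]]]]]] j /andP[j1 jn].
    case: j j1 jn => [|[|[|[|[|j]]]]] // _ jn.
    + by apply: c1.
    + by split; [apply: c2 | apply: c4].
    + by split; [apply: c1 | apply: c5].
    + by split; [apply: c3 | apply: c6].
    + rewrite /F /=; split; last by apply: c7.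
      rewrite /alphaSeq; case: ifP => ho; [apply: c1 | apply: c3] => //.
      by rewrite ho.
  - move=> hF; split; [|split; [|split; [|split; [|split; [|split]]]]].
    + move=> i /andP[i1 iN] ho; have := hF i; rewrite i1 iN => /(_ isT).
      case: i {i1 iN} ho => [|[|[|[|[|i]]]]] // ho; rewrite /F /=; try by case.
      by rewrite /alphaSeq ho => -[].
    + by move=> h; have := hF 2%N; rewrite h => /(_ isT) [].
    + move=> i /andP[i1 iN] ho; have hi0 : (0 < i)%N by clear -i1; lia.
      have := hF i; rewrite iN andbT => /(_ hi0).
      case: i i1 {iN hi0} ho => [|[|[|[|[|i]]]]] // _ ho; rewrite /F /=; try by case.
      by rewrite /alphaSeq (negbTE ho) => -[].
    + by move=> h; have := hF 2%N; rewrite h => /(_ isT) [].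
    + by move=> h; have := hF 3%N; rewrite h => /(_ isT) [].
    + by move=> h; have := hF 4%N; rewrite h => /(_ isT) [].
    + move=> i /andP[i1 iN]; have hi0 : (0 < i)%N by clear -i1; lia.
      have := hF i; rewrite iN andbT => /(_ hi0).
      by case: i i1 {iN hi0} => [|[|[|[|[|i]]]]] // _ [].
split.
  rewrite IIF; split.
  - move=> [cI1 cI2].
    have F1 : F 1%N.
      apply/cI1; apply/(eigC R a b 0); by rewrite /= subrr.
    suff H : forall i, (i <= n)%N -> forall j, (1 <= j <= i)%N -> F j.
      by move=> j /andP[j1 jn]; apply: (H n) => //; rewrite j1 jn.
    elim=> [|i IH] hi j /andP[j1 ji]; first by move: j1 ji; clear; lia.
    move: ji; rewrite leq_eqVlt => /orP[/eqP ->|ji]; last first.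
      by apply: IH; [clear -hi; lia | rewrite j1 -ltnS ji].
    case: i IH hi {j1} => [|i] IH hi; first exact: F1.
    have hi2 : (2 <= i.+2 <= n)%N by rewrite hi.
    apply: Fall' => //.
    + move=> k hk; apply: IH => //; clear -hi; lia.
    + move=> k hk; apply: hbn; clear -hk hi; lia.
    + apply/(eigC R a b i.+1); apply/(cI2 _ hi2); first exact: al_in.
      by left.
    + apply/(eigC R a b i.+1); apply/(cI2 _ hi2); first exact: be_in.
      by right.
  - move=> hF; split.
    + have F1 : a 1%N = al1 by apply: (hF 1%N); rewrite Hn.
      move=> x; rewrite (eigC R a b 0) /= F1; split.
      * by move/eqP; rewrite subr_eq0 => /eqP.
      * by move=> ->; rewrite subrr.
    + move=> i /andP[i2 iN] x hx.
      rewrite (eigC R a b i.-1) prednK; last by clear -i2; lia.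
      apply: (Siff R a b al1 al2 be2 be3 be4 i) => //.
      apply: allS' => //.
      * move=> j /andP[j1 ji]; apply: hF; rewrite j1 /=; exact: (leq_trans ji iN).
      * move=> j /andP[j1 ji]; apply: hbn; rewrite j1 /=; exact: (leq_trans ji iN).
move=> [c1 [c2 [c3 [c4 [c5 [c6 c7]]]]]].
have hb2 : (2 <= n)%N -> 0 < (be2 - al1) * (al1 - al2).
  by move=> h; rewrite -c4 //; apply: Hb; rewrite h.
have hb3 : (3 <= n)%N -> 0 < (be3 - al2) * (be3 - be2).
  by move=> h; rewrite -c5 //; apply: Hb; rewrite h.
split; [|split].
- move=> h4; apply: inB_of => //.
  + by apply: hb2; clear -h4; lia.
  + by apply: hb3; clear -h4; lia.
  + by rewrite -c6 //; apply: Hb; rewrite h4.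
- move=> h3; apply: inB3_of.
  + by apply: hb2; rewrite h3.
  + by apply: hb3; rewrite h3.
- by move=> h2; apply: inB2_of; apply: hb2; rewrite h2.
Qed.
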